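(* For each integer $k\ge1$, the monoid $M_k$ is isomorphic to $I_k$.
   Context: Construction $\mu$: let $M$ be a monoid, $f\colon M\to M$ an endomorphism, and $t\in M$ such that $st=tf(s)$ for all $s\in M$. Then $\mu(M,t,f)=(N,\tau,\phi)$ where $N$ is the disjoint union of $M$ and $\{\tau s : s\in M\}$ ($\tau$ a new symbol, $\tau s$ denoting the pair $(\tau,s)$); writing $\tau^0s=s$ and $\tau^1 s=\tau s$, define $\phi\colon N\to M\subseteq N$ by $\phi(\tau^e s)=t^ef(s)$ and multiplication by $(\tau^{e_1}s_1)(\tau^{e_2}s_2)=\tau^{e_1}(s_1s_2)$ if $e_2=0$ and $=\tau(\phi(\tau^{e_1}s_1)s_2)$ if $e_2=1$; $\tau$ denotes $\tau 1_M$. Then $N$ is a monoid, $\phi$ an endomorphism of $N$, and $\sigma\tau=\tau\phi(\sigma)$ for all $\sigma\in N$. Recursively: $M_1$ is the one-element monoid, $t_1$ its unique element, $f_1$ its unique endomorphism; $(M_{k+1},t_{k+1},f_{k+1})=\mu(M_k,t_k,f_k)$. $I_k$ is the monoid under composition of all $g\colon\{0,\dots,k-1\}\to\{0,\dots,k-1\}$ with $g(0)=0$ and $g(i-1)\le g(i)\le g(i-1)+1$ for $0<i<k$. *)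

(* Defs.v *)
From mathcomp Require Import all_boot.
Set Implicit Arguments. Unset Strict Implicit. Unset Printing Implicit Defensive.

Record tmon := TMon {
  car : Type;
  tmul : car -> car -> car;
  tone : car;
  tf : car -> car;
  tT : car }.

(* Construction mu.  N = M ⊔ {tau s}; an element tau^e s is encoded as the
   pair (e, s) with e : bool (false = exponent 0, true = exponent 1). *)
Definition mu_phi (A : tmon) (x : bool * car A) : car A :=
  if x.1 then @tmul A (@tT A) (@tf A x.2) else @tf A x.2.

Definition mu_mul (A : tmon) (x y : bool * car A) : bool * car A :=
  if y.1 then (true, @tmul A (mu_phi x) y.2) else (x.1, @tmul A x.2 y.2).

Definition mu (A : tmon) : tmon :=
  @TMon (bool * car A) (@mu_mul A) (false, @tone A)
        (fun x => (false, mu_phi x)) (true, @tone A).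

Definition M1 : tmon := @TMon unit (fun _ _ => tt) tt (fun _ => tt) tt.

Definition Mk (k : nat) : tmon := iter k.-1 mu M1.

Definition in_I (k : nat) (g : {ffun 'I_k -> 'I_k}) : bool :=
  [forall i : 'I_k, (i == 0 :> nat) ==> (g i == 0 :> nat)] &&
  [forall i : 'I_k, forall j : 'I_k,
     (j.+1 == i :> nat) ==> ((g j <= g i) && (g i <= (g j).+1))].

Definition fcomp (k : nat) (g h : {ffun 'I_k -> 'I_k}) : {ffun 'I_k -> 'I_k} :=
  [ffun i => g (h i)].

Definition fid (k : nat) : {ffun 'I_k -> 'I_k} := [ffun i => i].

Definition monoid_iso_I (A : tmon) (k : nat) (h : car A -> {ffun 'I_k -> 'I_k}) : Prop :=
  [/\ forall x, in_I (h x),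
      injective h,
      forall g, in_I g -> exists x, h x = g,
      h (@tone A) = fid k
    & forall x y, h (@tmul A x y) = fcomp (h x) (h y)].

(* Main.v *)
Require Import Defs.
From mathcomp Require Import all_boot.
From mathcomp Require Import zify.

Fixpoint Phi (n : nat) : car (iter n mu M1) -> nat -> nat :=
 match n return car (iter n mu M1) -> nat -> nat with
 | 0 => fun _ i => i
 | n'.+1 => fun (x : bool * car (iter n' mu M1)) i =>
     if i is j.+1 then Phi n' x.2 j + ~~ x.1 else 0
 end.

Lemma P1a n x : Phi n x 0 = 0.
Proof. by case: n x. Qed.

Lemma P1b n x i : Phi n x i.+1 = Phi n x i \/ Phi n x i.+1 = (Phi n x i).+1.
Proof.
elim: n x i => [|n IH] x i /=; first by right.
case: x => e s /=; case: i => [|j]; first by rewrite P1a; case: e; auto.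
by case: (IH s j) => ->; lia.
Qed.

Lemma Ple n x i : Phi n x i <= i.
Proof.
elim: i => [|i IH]; first by rewrite P1a.
by case: (P1b n x i) => ->; lia.
Qed.

Lemma P2 n i : i <= n -> Phi n (@tone _) i = i.
Proof.
elim: n i => [|n IH]; case=> [|i] //= Hi; rewrite IH //; lia.
Qed.

Lemma P5 n i : i <= n -> Phi n (@tT _) i = i.-1.
Proof.
case: n => [|n]; case: i => [|i] //= Hi; rewrite P2 //; lia.
Qed.

Definition sig (g : nat -> nat) i := if i is j.+1 then (g j).+1 else 0.

Lemma P34 n : (forall x y i, i <= n -> Phi n (@tmul _ x y) i = Phi n x (Phi n y i))
  /\ (forall x i, i <= n -> Phi n (@tf _ x) i = sig (Phi n x) i).
Proof.
elim: n => [|n [IHm IHf]].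
  by split => [x y|x] [|i].
have L : forall x j, j <= n -> Phi n (@mu_phi (iter n mu M1) x) j = Phi n.+1 x j.
  move=> [e s] j Hj; rewrite /mu_phi /=; case: e => /=.
    rewrite IHm; last by [].
    rewrite IHf // P5; last by rewrite /sig; case: j Hj => // j Hj; have := Ple n s j; lia.
    by case: j Hj => //= j _; rewrite addn0.
  by rewrite IHf //; case: j Hj => //= j _; rewrite addn1.
split.
  move=> [e1 s1] [e2 s2] [|i] Hi //=; rewrite /mu_mul /=.
  case: e2 => /=. 
    rewrite !addn0 IHm // L; last by have := Ple n s2 i; lia.
    by case: (Phi n s2 i).
  rewrite addn1 /= IHm //.
move=> [e s] [|i] Hi //=. by rewrite L // addn1.
Qed.

Lemma P6 n x y : (forall i, i <= n -> Phi n x i = Phi n y i) -> x = y.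
Proof.
elim: n x y => [|n IH] x y H; first by move: x y H => [] [].
move: x y H => [e1 s1] [e2 s2] H.
have H1 := H 1 erefl; rewrite /= !P1a in H1.
have E : e1 = e2 by move: H1; clear; case: e1; case: e2.
subst e2; congr pair; apply: IH => i Hi.
have := H i.+1 Hi; rewrite /=; lia.
Qed.

Lemma P7 n g : g 0 = 0 -> (forall i, i < n -> g i.+1 = g i \/ g i.+1 = (g i).+1) ->
  exists x, forall i, i <= n -> Phi n x i = g i.
Proof.
elim: n g => [|n IH] g g0 Hs.
  by exists tt => -[|i].
have mono : forall i, i <= n -> g 1 <= g i.+1.
  elim=> [|i IHi] Hi //; have := Hs i.+1 Hi; have := IHi (ltnW Hi); lia.
have g1 : g 1 <= 1 by have := Hs 0 erefl; lia.
have [|i Hi|s Hsx] := IH (fun j => g j.+1 - g 1); first by rewrite subnn.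
  by have := Hs i.+1 Hi; have := mono i (ltnW Hi); have := mono i.+1 Hi; lia.
exists (g 1 == 0, s) => -[|i] Hi /=; first by [].
rewrite Hsx //; have := mono i Hi; case: (g 1 =P 0) => /=; lia.
Qed.

Lemma Phi_lt n x (i : 'I_n.+1) : Phi n x i < n.+1.
Proof. exact: leq_ltn_trans (Ple n x i) (ltn_ord i). Qed.

Lemma Phi_lt' n x i : i <= n -> Phi n x i < n.+1.
Proof. by move=> Hi; rewrite ltnS (leq_trans (Ple _ _ _)). Qed.

Theorem proposition4p10 (k : nat) (hk : 1 <= k) :
  exists h : car (Mk k) -> {ffun 'I_k -> 'I_k}, monoid_iso_I h.
Proof.
case: k hk => // n _.
change (exists h : car (iter n mu M1) -> {ffun 'I_n.+1 -> 'I_n.+1}, monoid_iso_I h).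
exists (fun x => [ffun i : 'I_n.+1 => inord (Phi n x i)]).
split.
- move=> x; apply/andP; split.
    apply/forallP => i; apply/implyP => /eqP Hi.
    by rewrite ffunE inordK ?Phi_lt // Hi P1a.
  apply/forallP => i; apply/forallP => j; apply/implyP => /eqP Hi.
  rewrite !ffunE !inordK ?Phi_lt // -Hi.
  by case: (P1b n x j) => ->; rewrite ?leqnn ?leqnSn.
- move=> x y /ffunP H; apply: P6 => i Hi.
  have E := congr1 (@nat_of_ord _) (H (inord i)).
  rewrite !ffunE in E.
  have Hi' : i < n.+1 by [].
  rewrite (inordK Hi') in E.
  by rewrite (inordK (Phi_lt' n x i Hi)) (inordK (Phi_lt' n y i Hi)) in E.
- move=> g /andP [/forallP H0 /forallP H1].
  have [|i Hi|x Hx] := P7 n (fun i => nat_of_ord (g (inord i))).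
  + have := H0 (inord 0); rewrite (inordK (ltn0Sn n)) eqxx /=.
    by move/eqP.
  + have Hi1 : i.+1 < n.+1 by [].
    have Hi0 : i < n.+1 by apply: ltnW.
    have := H1 (inord i.+1) => /forallP /(_ (inord i)) /implyP.
    rewrite (inordK Hi1) (inordK Hi0) eqxx => /(_ isT) /andP [a b].
    lia.
  + exists x; apply/ffunP => i; apply: ord_inj.
    rewrite ffunE; rewrite (inordK (Phi_lt n x i)) Hx; last by rewrite -ltnS.
    by rewrite inord_val.
- apply/ffunP => i; apply: ord_inj.
  rewrite !ffunE P2; last by rewrite -ltnS.
  by rewrite inord_val.
- move=> x y; apply/ffunP => i; apply: ord_inj.
  rewrite !ffunE (inordK (Phi_lt n y i)).
  have Hi : i <= n by rewrite -ltnS.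
  have Hy : Phi n y i <= n by rewrite -ltnS; exact: Phi_lt.
  rewrite (inordK (Phi_lt' n x _ Hy)) (inordK (Phi_lt' n _ i Hi)).
  by rewrite (proj1 (P34 n)).
Qed.
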